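(* For every integer $k\ge1$ and every prime power $q$, $P(k,\mathbb{F}_q)=O(k,\mathbb{F}_q)$.
   Context: A sequence $(a_n)_{n\ge0}$ over $\mathbb{F}_q$ satisfies a linear recurrence of degree $k$ if there are $c_0,\dots,c_{k-1}\in\mathbb{F}_q$, with $c_0\neq0$ (standing assumption), such that $a_{n+k}=\sum_{i=0}^{k-1}c_ia_{n+i}$ for all $n\ge0$; such sequences are purely periodic and $\rho(\mathbf{a})$ is the least $m>0$ with $a_{n+m}=a_n$ for all $n\ge0$. $P(k,\mathbb{F}_q)$ is the set of all $\rho(\mathbf{a})$ for sequences $\mathbf{a}$ satisfying some linear recurrence of degree $k$ over $\mathbb{F}_q$. For nonzero $f(x)\in\mathbb{F}_q[x]$, write $f=x^rg$ with $r\ge0$, $\gcd(g,x)=1$, and let $\mathrm{ord}(f)$ be the least $n>0$ with $g\mid x^n-1$. $O(k,\mathbb{F}_q)=\{\mathrm{ord}(f): f\in\mathbb{F}_q[x],\ \deg f=k\}$. *)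

(* Defs.v *)
From HB Require Import structures.
From mathcomp Require Import all_boot all_order all_algebra all_field.
Set Implicit Arguments.
Unset Strict Implicit.
Unset Printing Implicit Defensive.
Import GRing.Theory.
Local Open Scope ring_scope.

Definition satisfies_rec (F : fieldType) (k : nat) (a : nat -> F) : Prop :=
  exists c : 'I_k -> F,
    (forall i : 'I_k, val i = 0%N -> c i != 0) /\
    forall n : nat, a (n + k)%N = \sum_(i < k) c i * a (n + i)%N.

Definition is_least_period (T : Type) (a : nat -> T) (m : nat) : Prop :=
  (0 < m)%N /\ (forall n, a (n + m)%N = a n) /\
  forall m' : nat, (0 < m')%N -> (forall n, a (n + m')%N = a n) -> (m <= m')%N.

Definition Pset (F : fieldType) (k : nat) (m : nat) : Prop :=
  exists a : nat -> F, satisfies_rec k a /\ is_least_period a m.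

Definition is_ord (F : fieldType) (f : {poly F}) (n : nat) : Prop :=
  f != 0 /\
  exists (r : nat) (g : {poly F}),
    f = 'X^r * g /\ coprimep g 'X /\
    (0 < n)%N /\ g %| 'X^n - 1 /\
    forall n' : nat, (0 < n')%N -> g %| 'X^n' - 1 -> (n <= n')%N.

Definition Oset (F : fieldType) (k : nat) (m : nat) : Prop :=
  exists f : {poly F}, size f = k.+1 /\ is_ord f m.

(* Main.v *)
Require Import Defs.
From HB Require Import structures.
From mathcomp Require Import all_boot all_order all_algebra all_field.
From mathcomp Require Import ring zify.
Set Implicit Arguments.
Unset Strict Implicit.
Unset Printing Implicit Defensive.
Import GRing.Theory.
Local Open Scope ring_scope.

Section Act.
Variable F : fieldType.
Implicit Types (p q : {poly F}) (a b : nat -> F).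

Definition act p a (n : nat) : F := \sum_(i < size p) p`_i * a (n + i)%N.

Lemma act_widen N p a n : (size p <= N)%N ->
  act p a n = \sum_(i < N) p`_i * a (n + i)%N.
Proof.
move=> hN; rewrite /act (big_ord_widen N (fun i => p`_i * a (n + i)%N)) //.
rewrite big_mkcond /=; apply: eq_bigr => i _; case: ifP => // /negbT.
by rewrite -leqNgt => h; rewrite nth_default // mul0r.
Qed.


Lemma act_add p q a n : act (p + q) a n = act p a n + act q a n.
Proof.
set N := maxn (size p) (size q).
rewrite !(@act_widen N) ?leq_maxl ?leq_maxr ?size_polyD // -big_split /=.
by apply: eq_bigr => i _; rewrite coefD mulrDl.
Qed.

Lemma act_scale c p a n : act (c *: p) a n = c * act p a n.
Proof.
rewrite !(@act_widen (size p)) ?size_scale_leq // mulr_sumr.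
by apply: eq_bigr => i _; rewrite coefZ mulrA.
Qed.

Lemma act_opp p a n : act (- p) a n = - act p a n.
Proof. by rewrite -scaleN1r act_scale mulN1r. Qed.

Lemma act_sub p q a n : act (p - q) a n = act p a n - act q a n.
Proof. by rewrite act_add act_opp. Qed.

Lemma act0 a n : act 0 a n = 0.
Proof. by rewrite /act size_poly0 big_ord0. Qed.

Lemma act_sum k (G : 'I_k -> {poly F}) a n :
  act (\sum_(i < k) G i) a n = \sum_(i < k) act (G i) a n.
Proof.
exact: (big_morph (fun p => act p a n) (fun p q => act_add p q a n) (act0 a n)).
Qed.

Lemma act_Xn j a n : act 'X^j a n = a (n + j)%N.
Proof.
rewrite /act size_polyXn big_ord_recr /= big1 => [|i _].
  by rewrite coefXn eqxx mul1r add0r.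
by rewrite coefXn (ltn_eqF (ltn_ord i)) mul0r.
Qed.

Lemma act1 a n : act 1 a n = a n.
Proof. by rewrite -(expr0 'X) act_Xn addn0. Qed.

Lemma act_ext p a b n : (forall m, a m = b m) -> act p a n = act p b n.
Proof. by move=> h; apply: eq_bigr => i _; rewrite h. Qed.

Lemma act_zseq p n : act p (fun _ => 0) n = 0.
Proof. by apply: big1 => i _; rewrite mulr0. Qed.

Lemma act_mulX q a n : act ('X * q) a n = act q a n.+1.
Proof.
rewrite (@act_widen (size q).+1); last first.
  by apply: leq_trans (size_polyMleq _ _) _; rewrite size_polyX.
rewrite big_ord_recl coefXM eqxx mul0r add0r /act.
by apply: eq_bigr => i _; rewrite coefXM /= addnS addSn.
Qed.

Lemma act_shift p b n : act p (fun m => b m.+1) n = act p b n.+1.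
Proof. by apply: eq_bigr => i _; rewrite addSn. Qed.

Lemma act_mul p q a n : act (p * q) a n = act p (act q a) n.
Proof.
elim/poly_ind: p q a n => [|p c IH] q a n.
  by rewrite mul0r !act0.
rewrite mulrDl -mulrA act_add IH mul_polyC act_scale.
rewrite act_add (mulrC p) act_mulX -[c%:P]mulr1 mul_polyC act_scale act1.
congr (_ + _); rewrite -act_shift; apply: act_ext => m.
by rewrite act_mulX.
Qed.

Lemma act_dvd g p a : (forall n, act g a n = 0) -> g %| p -> forall n, act p a n = 0.
Proof.
move=> hg d n; rewrite -(divpK d) act_mul.
by rewrite (act_ext _ _ hg) act_zseq.
Qed.

End Act.

Lemma rootX0_coprime (F : fieldType) (g : {poly F}) :
  coprimep g 'X = ~~ root g 0.
Proof. by rewrite -coprimep_XsubC polyC0 subr0. Qed.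

Lemma P_to_O (F : fieldType) (k : nat) (a : nat -> F) (m : nat) :
  satisfies_rec k a -> is_least_period a m -> Oset F k m.
Proof.
case=> c [_ hrec] [m0 [per minm]].
pose h : {poly F} := 'X^k - \sum_(i < k) c i *: 'X^i.
have hact n : act h a n = 0.
  rewrite act_sub act_Xn act_sum hrec; apply/eqP; rewrite subr_eq0; apply/eqP.
  by apply: eq_bigr => i _; rewrite act_scale act_Xn.
have hcoef j : (k <= j)%N -> h`_j = (j == k)%:R.
  move=> kj; rewrite coefB coefXn coef_sum big1 ?subr0 // => i _.
  rewrite coefZ coefXn (_ : (j == i) = false) ?mulr0 //; have := ltn_ord i; lia.
have h0 : h != 0.
  apply/eqP => h0; have := hcoef k (leqnn k); rewrite h0 coef0 eqxx => /eqP.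
  by rewrite eq_sym oner_eq0.
have sh : (size h <= k.+1)%N.
  apply/leq_sizeP => j kj; rewrite hcoef; last by lia.
  by rewrite (_ : (j == k) = false) //; lia.
pose w : {poly F} := 'X^m - 1.
have wact n : act w a n = 0 by rewrite act_sub act_Xn act1 per subrr.
pose g := gcdp h w.
have gact : forall n, act g a n = 0.
  have := egcdpE h w; set e := egcdp h w => E.
  have d : e.1 * h + e.2 * w %| g by rewrite -(eqp_dvdl _ E) dvdpp.
  apply: act_dvd d => n.
  rewrite act_add !act_mul (act_ext _ _ hact) (act_ext _ _ wact) !act_zseq.
  by rewrite addr0.
have g0 : g != 0 by rewrite gcdp_eq0 negb_and h0.
have sg : (size g <= k.+1)%N.
  exact: leq_trans (dvdp_leq h0 (dvdp_gcdl h w)) sh.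
have cop : coprimep g 'X.
  rewrite rootX0_coprime; apply/negP => r0.
  have := root_dvdp (dvdp_gcdr h w) r0.
  rewrite /root /w !hornerE expr0n /=.
  have -> : (m == 0%N) = false by lia.
  by rewrite sub0r oppr_eq0 oner_eq0.
exists ('X^(k.+1 - size g) * g); split.
  by rewrite mulrC size_mulXn // subnK.
split.
  by rewrite mulf_neq0 // -size_poly_gt0 size_polyXn.
exists (k.+1 - size g)%N, g; do !split => //.
  exact: dvdp_gcdr.
move=> m' m'0 d; apply: minm => // n.
have := act_dvd gact d n.
by rewrite act_sub act_Xn act1 => /eqP; rewrite subr_eq0 => /eqP.
Qed.

Lemma O_to_P (F : fieldType) (k : nat) (m : nat) : Oset F k m -> Pset F k m.
Proof.
case=> f [sf [f0 [r [g [fE [cop [m0 [dv minm]]]]]]]].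
have g0 : g != 0 by apply: contraNneq f0 => g0; rewrite fE g0 mulr0.
pose L (p : {poly F}) := (p %% g)`_(size g).-2.
have L_add p q : L (p + q) = L p + L q by rewrite /L modpD coefD.
have L_scale c p : L (c *: p) = c * L p by rewrite /L modpZl coefZ.
have L0 : L 0 = 0 by rewrite /L mod0p coef0.
pose a n := L 'X^n.
have key1 p n : act p a n = L ('X^n * p).
  rewrite -{2}(coefK p) poly_def mulr_sumr.
  rewrite (big_morph L L_add L0) /act; apply: eq_bigr => i _.
  by rewrite -scalerAr -exprD L_scale.
have key2 p : (forall n, L ('X^n * p) = 0) -> g %| p.
  move=> H; apply/negPn/negP => nd.
  pose u := p %% g.
  have u0 : u != 0 by apply: contra nd => /eqP u0; apply/modp_eq0P.
  have su : (size u < size g)%N by rewrite ltn_modp.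
  have spu : (0 < size u)%N by rewrite size_poly_gt0.
  have [U UE] : exists U, size u = U by eexists.
  have [G GE] : exists G, size g = G by eexists.
  rewrite UE GE in su; rewrite UE in spu.
  pose j := (G.-1 - U)%N.
  have := H j; rewrite /L -modp_mul -/u modp_small; last first.
    by rewrite mulrC size_mulXn // UE GE /j; lia.
  rewrite coefXnM GE ifF; last by rewrite /j; lia.
  have -> : (G.-2 - j = U.-1)%N by rewrite /j; lia.
  rewrite -UE.
  by move=> /eqP; rewrite -lead_coefE lead_coef_eq0 (negbTE u0).
have key3 p : g %| p -> forall n, L ('X^n * p) = 0.
  by move=> d n; rewrite /L modp_eq0 ?coef0 // dvdp_mull.
have perE m' : (forall n, a (n + m')%N = a n) <-> g %| 'X^m' - 1.
  split.
    move=> H; apply: key2 => n; rewrite -key1 act_sub act_Xn act1 H subrr //.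
  move=> d n; have := key3 _ d n; rewrite -key1 act_sub act_Xn act1.
  by move=> /eqP; rewrite subr_eq0 => /eqP.
exists a; split; last first.
  split=> //; split; first by apply/perE.
  by move=> m' m'0 H; apply: minm => //; apply/perE.
pose h := g * ('X - 1%:P) ^+ r.
have srg : (r + size g = k.+1)%N by rewrite -sf fE mulrC size_mulXn.
have sh : size h = k.+1.
  rewrite /h size_mul // ?size_exp_XsubC.
    have [G GE] : exists G, size g = G by eexists.
    by rewrite GE in srg; rewrite GE; lia.
  by rewrite -size_poly_gt0 size_exp_XsubC.
have h0 : h != 0 by rewrite -size_poly_gt0 sh.
have hk : h`_k != 0.
  by rewrite -[k]/(k.+1.-1) -sh -lead_coefE lead_coef_eq0.
have hc0 : h`_0 != 0.
  rewrite -horner_coef0 /h hornerM horner_exp hornerXsubC mulf_neq0 //.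
    by rewrite rootX0_coprime in cop.
  by rewrite expf_neq0 // sub0r oppr_eq0 oner_eq0.
have hact n : act h a n = 0 by rewrite key1 key3 // dvdp_mulIl.
exists (fun i : 'I_k => - h`_i / h`_k); split.
  move=> i /= ->; by rewrite mulf_neq0 ?oppr_eq0 ?invr_eq0.
move=> n; have := hact n; rewrite /act sh big_ord_recr /= => E.
apply: (mulfI hk); rewrite mulr_sumr.
have -> : h`_k * a (n + k)%N = - \sum_(i < k) h`_i * a (n + i)%N.
  by apply/eqP; rewrite -addr_eq0 addrC E.
rewrite -sumrN; apply: eq_bigr => i _; field.
by [].
Qed.

Theorem lemma3p2 (F : finFieldType) (k : nat) (hk : (1 <= k)%N) :
  forall m : nat, Pset F k m <-> Oset F k m.
Proof.
move=> m; split; first by case=> a [sa lp]; exact: P_to_O sa lp.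
exact: O_to_P.
Qed.
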